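(* Let $n\ge1$, $k\ge2$, $0<\rho<1$, and $m\in\{j/2^n:0\le j\le2^n\}$. Let $Y^1,\dots,Y^k\in\{0,1\}^n$ be $\rho$-correlated uniform binary strings. Then among all Boolean functions $f:\{0,1\}^n\to\{0,1\}$ with $\mathbb{E} f=m$, the agreement probability $\mathbb{P}(f(Y^1)=\cdots=f(Y^k))$ is maximized by some monotone function.
   Context: $\{0,1\}^n$ carries the uniform measure. $Y^1,\dots,Y^k$ are $\rho$-correlated if $Y^i=X+Z^i$ (mod 2 coordinatewise), where $X$ is uniform on $\{0,1\}^n$ and $Z^1,\dots,Z^k$ are independent of each other and of $X$, each with i.i.d. Bernoulli($\epsilon$) coordinates, $\epsilon=(1-\sqrt\rho)/2$. A function $f$ is monotone if $f(x)\le f(y)$ whenever $x_i\le y_i$ for all $i$. *)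

(* Defs.v *)
From HB Require Import structures.
From mathcomp Require Import all_boot all_order all_algebra.
From mathcomp Require Import reals.
Set Implicit Arguments. Unset Strict Implicit. Unset Printing Implicit Defensive.
Import Order.TTheory GRing.Theory Num.Theory.
Local Open Scope ring_scope.

Definition cube (n : nat) := {ffun 'I_n -> bool}.

Definition xorv n (x y : cube n) : cube n := [ffun i => x i (+) y i].

Section Defs.
Variable R : realType.

Definition eps (rho : R) : R := (1 - Num.sqrt rho) / 2.

Definition noise_prob (rho : R) n (z : cube n) : R :=
  \prod_(i < n) (if z i then eps rho else 1 - eps rho).

Definition mean n (f : cube n -> bool) : R :=
  (2 ^+ n)^-1 * \sum_(x : cube n) (f x)%:R.

(* P(f(Y^1) = ... = f(Y^k)) where Y^l = X + Z^l, X uniform, Z^1..Z^k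
   independent Bernoulli(eps) noise vectors, all independent of X. *)
Definition agree_prob (rho : R) n k (f : cube n -> bool) : R :=
  \sum_(x : cube n) \sum_(z : {ffun 'I_k -> cube n})
     (2 ^+ n)^-1 * (\prod_(l < k) noise_prob rho (z l)) *
     ([exists b : bool, [forall l : 'I_k, f (xorv x (z l)) == b]])%:R.

End Defs.

Definition monotone_bool n (f : cube n -> bool) : Prop :=
  forall x y : cube n, (forall i, x i ==> y i) -> f x ==> f y.

(* Main.v *)
Require Import Defs.
From HB Require Import structures.
From mathcomp Require Import all_boot all_order all_algebra.
From mathcomp Require Import reals.
From mathcomp Require Import ring lra zify.
From Stdlib Require Import FunctionalExtensionality.
Import Order.TTheory GRing.Theory Num.Theory.
Local Open Scope ring_scope.

Section TwoPoint.
Variable R : realType.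

Lemma two_point_inv (I : Type) (r : seq I) (u v : I -> bool -> R) :
  (forall l, 0 <= v l false /\ v l false <= v l true) ->
  (forall l, (u l true = v l true /\ u l false = v l false) \/
             (u l true = v l false /\ u l false = v l true)) ->
  [/\ 0 <= \prod_(l <- r) u l true <= \prod_(l <- r) v l true,
      0 <= \prod_(l <- r) u l false <= \prod_(l <- r) v l true,
      0 <= \prod_(l <- r) v l false &
      \prod_(l <- r) u l true + \prod_(l <- r) u l false <=
      \prod_(l <- r) v l true + \prod_(l <- r) v l false].
Proof.
move=> Hv Hu; elim: r => [|l r [/andP[A1 A2] /andP[B1 B2] C D]].
  by rewrite !big_nil ler01 lexx.
rewrite !big_cons.
have [V1 V2] := Hv l.
set P1 := \prod_(j <- r) u j true in A1 A2 D *.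
set P0 := \prod_(j <- r) u j false in B1 B2 D *.
set X := \prod_(j <- r) v j true in A2 B2 D *.
set Y := \prod_(j <- r) v j false in C D *.
case: (Hu l) => [[-> ->]|[-> ->]]; split; try (apply/andP; split);
  try nra.
Qed.

Lemma two_point (I : Type) (r : seq I) (u v : I -> bool -> R) (s0 : bool) :
  (forall l, 0 <= v l (~~ s0) /\ v l (~~ s0) <= v l s0) ->
  (forall l, (u l s0 = v l s0 /\ u l (~~ s0) = v l (~~ s0)) \/
             (u l s0 = v l (~~ s0) /\ u l (~~ s0) = v l s0)) ->
  \prod_(l <- r) u l true + \prod_(l <- r) u l false <=
  \prod_(l <- r) v l true + \prod_(l <- r) v l false.
Proof.
case: s0 => /= Hv Hu.
  by case: (@two_point_inv I r u v Hv Hu).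
case: (@two_point_inv I r (fun l b => u l (~~ b)) (fun l b => v l (~~ b)) Hv Hu).
by move=> _ _ _; rewrite addrC [X in _ <= X]addrC.
Qed.
End TwoPoint.

Section OneDim.
Variable R : realType.
Definition pb (e : R) (t : bool) : R := if t then e else 1 - e.
Definition hcomp (H : bool -> bool) (t : bool) :=
  if t then H false || H true else H false && H true.
Definition mm (e : R) (H : bool -> bool) (a d be b : bool) : R :=
  \sum_(t : bool) pb e (d (+) t) * (H (a (+) d (+) (b (+) t)) == be)%:R.

Lemma mm_facts e H a d be : 0 <= e -> e <= 1 - e ->
  (0 <= mm e (hcomp H) a d be (~~ (a (+) be)) /\
   mm e (hcomp H) a d be (~~ (a (+) be)) <= mm e (hcomp H) a d be (a (+) be)) /\
  ((mm e H a d be (a (+) be) = mm e (hcomp H) a d be (a (+) be) /\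
    mm e H a d be (~~ (a (+) be)) = mm e (hcomp H) a d be (~~ (a (+) be))) \/
   (mm e H a d be (a (+) be) = mm e (hcomp H) a d be (~~ (a (+) be)) /\
    mm e H a d be (~~ (a (+) be)) = mm e (hcomp H) a d be (a (+) be))).
Proof.
move=> e0 e1; rewrite /mm /hcomp !big_bool /pb.
case Ht: (H true); case Hf: (H false); case: a; case: be; case: d;
  rewrite /= ?Ht ?Hf /= ?mulr1 ?mulr0 ?addr0 ?add0r;
  (split; [split; lra | first [by left | by right | idtac]]).
Qed.
End OneDim.
Arguments pb {R}. Arguments mm {R}.

Section OneDim2.
Variable R : realType.

Lemma prod_ind (I : finType) (P : I -> bool) :
  \prod_(l : I) ((P l)%:R : R) = ([forall l, P l])%:R.
Proof.
case: (boolP [forall l, P l]) => [/forallP A | /forallP A].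
  by rewrite big1 // => l _; rewrite A.
have [l0 Hl0] : exists l, ~~ P l.
  by apply/existsP; rewrite -negb_forall; apply/forallP.
by rewrite (bigD1 l0) //= (negbTE Hl0) mul0r.
Qed.

Lemma ind_expand k (H : 'I_k -> bool) : (0 < k)%N ->
  ([exists be, [forall l, H l == be]])%:R =
  \sum_(be : bool) \prod_(l < k) ((H l == be)%:R : R).
Proof.
move=> k0; rewrite big_bool !prod_ind.
have -> : [exists be, [forall l, H l == be]] =
   [forall l, H l == true] || [forall l, H l == false].
  apply/existsP/orP => [[[] C]|[C|C]]; by [left|right|exists true|exists false].
case: (boolP [forall l, H l == true]) => [/forallP A|A];
case: (boolP [forall l, H l == false]) => [/forallP B|B] //=;
  rewrite ?mulr0n ?addr0 ?add0r //.
by move: (A (Ordinal k0)) (B (Ordinal k0)) => /eqP ->.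
Qed.

Lemma expand_sum k (e : R) (a : bool) (d : 'I_k -> bool) (h : 'I_k -> bool -> bool) : (0 < k)%N ->
  \sum_(b : bool) \sum_(c : {ffun 'I_k -> bool})
     (\prod_(l < k) pb e (d l (+) c l)) *
     ([exists be, [forall l, h l (a (+) d l (+) (b (+) c l)) == be]])%:R
  = \sum_(be : bool) \sum_(b : bool) \prod_(l < k) mm e (h l) a (d l) be b.
Proof.
move=> k0.
under eq_bigr => b _ do under eq_bigr => c _ do rewrite ind_expand // mulr_sumr.
under eq_bigr => b _ do rewrite exchange_big /=.
rewrite exchange_big /=; apply: eq_bigr => be _; apply: eq_bigr => b _.
under eq_bigr => c _ do rewrite -big_split /=.
rewrite -(bigA_distr_bigA (fun l t => pb e (d l (+) t) *
   ((h l (a (+) d l (+) (b (+) t)) == be)%:R : R))).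
by [].
Qed.

Lemma one_dim k (e : R) (a : bool) (d : 'I_k -> bool) (h : 'I_k -> bool -> bool) :
  (0 < k)%N -> 0 <= e -> e <= 1 - e ->
  \sum_(b : bool) \sum_(c : {ffun 'I_k -> bool})
     (\prod_(l < k) pb e (d l (+) c l)) *
     ([exists be, [forall l, h l (a (+) d l (+) (b (+) c l)) == be]])%:R
  <=
  \sum_(b : bool) \sum_(c : {ffun 'I_k -> bool})
     (\prod_(l < k) pb e (d l (+) c l)) *
     ([exists be, [forall l, hcomp (h l) (a (+) d l (+) (b (+) c l)) == be]])%:R.
Proof.
move=> k0 e0 e1; rewrite expand_sum // (expand_sum _ _ _ _ (fun l => hcomp (h l))) //; apply: ler_sum => be _.
rewrite !big_bool /=.
apply: (@two_point R _ _ (fun l b => mm e (h l) a (d l) be b)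
   (fun l b => mm e (hcomp (h l)) a (d l) be b) (a (+) be)) => l;
  have [F1 F2] := @mm_facts R e (h l) a (d l) be e0 e1; by [].
Qed.
End OneDim2.

Definition flp n (x : cube n) (i : 'I_n) (b : bool) : cube n :=
  [ffun j => if j == i then x j (+) b else x j].
Arguments flp {n}.
Definition setb n (x : cube n) (i : 'I_n) (t : bool) : cube n :=
  [ffun j => if j == i then t else x j].
Arguments setb {n}.
Definition flipz n k (z : {ffun 'I_k -> cube n}) (i : 'I_n) (c : {ffun 'I_k -> bool}) :
  {ffun 'I_k -> cube n} := [ffun l => flp (z l) i (c l)].
Arguments flipz {n k}.
Definition cmpr n (f : cube n -> bool) (i : 'I_n) (v : cube n) : bool :=
  if v i then f (setb v i false) || f (setb v i true)
  else f (setb v i false) && f (setb v i true).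
Arguments cmpr {n}.

Lemma flipK n i b : involutive (fun x : cube n => flp x i b).
Proof. by move=> x; apply/ffunP => j; rewrite !ffunE; case: eqP => // _; rewrite addbK. Qed.

Lemma flipzK n k i c : involutive (fun z : {ffun 'I_k -> cube n} => flipz z i c).
Proof. by move=> z; apply/ffunP => l; rewrite !ffunE flipK. Qed.

Lemma xor_flip n (x w : cube n) i b c :
  xorv (flp x i b) (flp w i c) = flp (xorv x w) i (b (+) c).
Proof.
apply/ffunP => j; rewrite !ffunE; case: eqP => // _.
by case: (x j); case: (w j); case: b; case: c.
Qed.

Lemma flip_setb n (y : cube n) i s : flp y i s = setb y i (y i (+) s).
Proof. by apply/ffunP => j; rewrite !ffunE; case: eqP => // ->. Qed.

Lemma setb_flip n (y : cube n) i s t : setb (flp y i s) i t = setb y i t.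
Proof. by apply/ffunP => j; rewrite !ffunE; case: eqP. Qed.

Lemma setb_setb n (y : cube n) i s t : setb (setb y i s) i t = setb y i t.
Proof. by apply/ffunP => j; rewrite !ffunE; case: eqP. Qed.

Lemma setb_id n (y : cube n) i t : (setb y i t) i = t.
Proof. by rewrite ffunE eqxx. Qed.

Lemma comp_flip n (f : cube n -> bool) i y s :
  cmpr f i (flp y i s) = hcomp (fun t => f (setb y i t)) (y i (+) s).
Proof. by rewrite /cmpr /hcomp !setb_flip !ffunE eqxx. Qed.

Lemma f_flip n (f : cube n -> bool) i y s :
  f (flp y i s) = (fun t => f (setb y i t)) (y i (+) s).
Proof. by rewrite flip_setb. Qed.

Section Main.
Variable R : realType.

Definition term (rho : R) n k (f : cube n -> bool) (x : cube n)
   (z : {ffun 'I_k -> cube n}) : R :=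
  (2 ^+ n)^-1 * (\prod_(l < k) noise_prob rho (z l)) *
     ([exists b : bool, [forall l : 'I_k, f (xorv x (z l)) == b]])%:R.
Arguments term rho {n k}.

Lemma agreeE (rho : R) n k f : agree_prob rho k f = \sum_x \sum_z @term rho n k f x z.
Proof. by []. Qed.

Lemma orbit_sum n k i (F : cube n -> {ffun 'I_k -> cube n} -> R) :
  \sum_(x : cube n) \sum_(z : {ffun 'I_k -> cube n}) \sum_(b : bool) \sum_(c : {ffun 'I_k -> bool})
      F (flp x i b) (flipz z i c)
  = \sum_(b : bool) \sum_(c : {ffun 'I_k -> bool}) \sum_(x : cube n) \sum_(z : {ffun 'I_k -> cube n}) F x z.
Proof.
under eq_bigr => x _ do rewrite exchange_big /=.
rewrite exchange_big /=.
under eq_bigr => b _ do under eq_bigr => z _ do rewrite exchange_big /=.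
under eq_bigr => b _ do rewrite exchange_big /=.
apply: eq_bigr => b _; apply: eq_bigr => c _.
rewrite [RHS](reindex_inj (can_inj (@flipK n i b))) /=.
apply: eq_bigr => x _.
by rewrite [RHS](reindex_inj (can_inj (@flipzK n k i c))) /=.
Qed.

Lemma noise_flip (rho : R) n (v : cube n) i c :
  noise_prob rho (flp v i c) =
  (\prod_(j < n | j != i) pb (eps rho) (v j)) * pb (eps rho) (v i (+) c).
Proof.
rewrite /noise_prob (bigD1 i) //= mulrC ffunE eqxx; congr (_ * _).
by apply: eq_bigr => j /negbTE Hj; rewrite ffunE Hj.
Qed.

Lemma pb_ge0 (e : R) t : 0 <= e -> e <= 1 - e -> 0 <= pb e t.
Proof. by move=> ? ?; case: t => /=; lra. Qed.

Lemma pointwise_le (rho : R) n k (f : cube n -> bool) i x z :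
  (0 < k)%N -> 0 <= eps rho -> eps rho <= 1 - eps rho ->
  \sum_(b : bool) \sum_(c : {ffun 'I_k -> bool}) term rho f (flp x i b) (flipz z i c)
  <= \sum_(b : bool) \sum_(c : {ffun 'I_k -> bool}) term rho (cmpr f i) (flp x i b) (flipz z i c).
Proof.
move=> k0 e0 e1.
set Q := \prod_(l < k) \prod_(j < n | j != i) pb (eps rho) (z l j).
have E : forall g : cube n -> bool, forall b c,
   term rho g (flp x i b) (flipz z i c) =
   ((2 ^+ n)^-1 * Q) * ((\prod_(l < k) pb (eps rho) (z l i (+) c l)) *
     ([exists be, [forall l, g (flp (xorv x (z l)) i (b (+) c l)) == be]])%:R).
  move=> g b c; rewrite /term.
  under eq_bigr => l _ do rewrite ffunE noise_flip.
  rewrite big_split /= -/Q !mulrA.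
  congr (_ * _ %:R).
  by under eq_existsb => be do under eq_forallb => l do rewrite ffunE xor_flip.
under eq_bigr => b _ do under eq_bigr => c _ do rewrite E.
under [X in _ <= X]eq_bigr => b _ do under eq_bigr => c _ do rewrite E.
under eq_bigr => b _ do rewrite -mulr_sumr.
under [X in _ <= X]eq_bigr => b _ do rewrite -mulr_sumr.
rewrite -!mulr_sumr.
apply: ler_wpM2l.
  apply: mulr_ge0; first by rewrite invr_ge0 exprn_ge0.
  by apply: prodr_ge0 => l _; apply: prodr_ge0 => j _; apply: pb_ge0.
under eq_bigr => b _ do under eq_bigr => c _ do
  under eq_existsb => be do under eq_forallb => l do rewrite f_flip ffunE.
under [X in _ <= X]eq_bigr => b _ do under eq_bigr => c _ do
  under eq_existsb => be do under eq_forallb => l do rewrite comp_flip ffunE.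
exact: (@one_dim R k (eps rho) (x i) (fun l => z l i)
          (fun l t => f (setb (xorv x (z l)) i t)) k0 e0 e1).
Qed.
End Main.

Section Final.
Variable R : realType.

Lemma compress_agree (rho : R) n k (f : cube n -> bool) (i : 'I_n) :
  (0 < k)%N -> 0 <= eps rho -> eps rho <= 1 - eps rho ->
  agree_prob rho k f <= agree_prob rho k (cmpr f i).
Proof.
move=> k0 e0 e1.
have H : \sum_(b : bool) \sum_(c : {ffun 'I_k -> bool}) agree_prob rho k f <=
         \sum_(b : bool) \sum_(c : {ffun 'I_k -> bool}) agree_prob rho k (cmpr f i).
  rewrite !agreeE -(@orbit_sum R n k i (@term R rho n k f)) -(@orbit_sum R n k i (@term R rho n k (cmpr f i))).
  apply: ler_sum => x _; apply: ler_sum => z _; exact: pointwise_le.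
move: H; rewrite !sumr_const lerMn2r /= lerMn2r card_ffun card_bool card_ord.
by rewrite expn_eq0.
Qed.

Lemma flip0 n (x : cube n) i : flp x i false = x.
Proof. by apply/ffunP => j; rewrite ffunE addbF; case: eqP => // ->. Qed.

Lemma sum_flip (V : nmodType) n i (F : cube n -> V) :
  \sum_(x : cube n) F x = \sum_(x : cube n) F (flp x i true).
Proof. exact: (reindex_inj (can_inj (@flipK n i true))). Qed.

Lemma comp_mean n (f : cube n -> bool) (i : 'I_n) : mean R (cmpr f i) = mean R f.
Proof.
rewrite /mean; congr (_ * _).
have H : forall g : cube n -> bool, (\sum_x ((g x)%:R : R)) *+ 2 =
     \sum_x ((g x)%:R + (g (flp x i true))%:R).
  by move=> g; rewrite mulr2n {2}(@sum_flip _ n i) -big_split.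
suff : (\sum_x (((cmpr f i x) : nat)%:R : R)) *+ 2 = (\sum_x ((f x : nat)%:R : R)) *+ 2.
  by move/eqP; rewrite eqrMn2r /= => /eqP.
rewrite !H; apply: eq_bigr => x _.
rewrite -{1}(@flip0 n x i) -{3}(@flip0 n x i) !comp_flip !f_flip.
rewrite /hcomp addbF.
case: (x i); case: (f (setb x i false)); case: (f (setb x i true)) => //=;
  by rewrite addrC.
Qed.
End Final.

Definition cnt {n} (x : cube n) : nat := (\sum_(j < n) (x j : nat))%N.
Definition pot {n} (g : cube n -> bool) : nat := (\sum_(x : cube n) g x * cnt x)%N.

Lemma cnt_setb {n} (x : cube n) i t : cnt (setb x i t) = (cnt (setb x i false) + t)%N.
Proof.
rewrite /cnt (bigD1 i) //= [in RHS](bigD1 i) //= !ffunE eqxx /= add0n addnC; congr (_ + _)%N.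
by apply: eq_bigr => j /negbTE Hj; rewrite !ffunE Hj.
Qed.

Lemma pot_pair n (g : cube n -> bool) i :
  (pot g * 2 = \sum_(x : cube n) (g x * cnt x + g (flp x i true) * cnt (flp x i true)))%N.
Proof.
by rewrite big_split /= -(@sum_flip _ n i (fun x => g x * cnt x)%N) muln2 -addnn.
Qed.

Lemma pair_le n (f : cube n -> bool) i x :
  (f x * cnt x + f (flp x i true) * cnt (flp x i true) <=
   cmpr f i x * cnt x + cmpr f i (flp x i true) * cnt (flp x i true))%N /\
  (f (setb x i false) -> ~~ f (setb x i true) ->
  (f x * cnt x + f (flp x i true) * cnt (flp x i true) <
   cmpr f i x * cnt x + cmpr f i (flp x i true) * cnt (flp x i true))%N).
Proof.
have sx : setb x i (x i) = x by apply/ffunP => j; rewrite ffunE; case: eqP => // ->.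
have E1 : f x = f (setb x i (x i)) by rewrite sx.
have E2 : f (flp x i true) = f (setb x i (~~ x i)) by rewrite f_flip addbT.
have E3 : cmpr f i x = hcomp (fun t => f (setb x i t)) (x i) by [].
have E4 : cmpr f i (flp x i true) = hcomp (fun t => f (setb x i t)) (~~ x i).
  by rewrite comp_flip addbT.
have E5 : cnt x = (cnt (setb x i false) + x i)%N by rewrite -cnt_setb sx.
have E6 : cnt (flp x i true) = (cnt (setb x i false) + ~~ x i)%N.
  by rewrite flip_setb addbT -cnt_setb.
rewrite E1 E2 E3 E4 E5 E6 /hcomp.
move: (cnt (setb x i false)) => c0.
case: (x i); case: (f (setb x i false)); case: (f (setb x i true)) => /=; lia.
Qed.

Lemma pot_lt n (f : cube n -> bool) i v :
  f (setb v i false) -> ~~ f (setb v i true) -> (pot f < pot (cmpr f i))%N.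
Proof.
move=> A B.
rewrite -(ltn_pmul2r (_ : 0 < 2)%N) // (@pot_pair n f i) (@pot_pair n (cmpr f i) i).
set x0 := setb v i false.
rewrite (bigD1 x0) //= [X in (_ < X)%N](bigD1 x0) //=.
have [_ S] := @pair_le n f i x0.
have S2 : _ := S ltac:(by rewrite /x0 setb_setb) ltac:(by rewrite /x0 setb_setb).
have L : (\sum_(x | x != x0) (f x * cnt x + f (flp x i true) * cnt (flp x i true)) <=
          \sum_(x | x != x0) (cmpr f i x * cnt x + cmpr f i (flp x i true) * cnt (flp x i true)))%N.
  by apply: leq_sum => x _; case: (@pair_le n f i x).
by rewrite -addSn; apply: leq_add.
Qed.

Lemma pot_le n (g : cube n -> bool) : (pot g <= \sum_(x : cube n) cnt x)%N.
Proof. by apply: leq_sum => x _; case: (g x); rewrite ?mul1n ?mul0n. Qed.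

Lemma mono_of n (f : cube n -> bool) :
  (forall i v, f (setb v i false) ==> f (setb v i true)) -> monotone_bool f.
Proof.
move=> Hf x y Hxy.
pose z m : cube n := [ffun j : 'I_n => if (j < m)%N then y j else x j].
have z0 : z 0%N = x by apply/ffunP => j; rewrite ffunE.
have zn : z n = y by apply/ffunP => j; rewrite ffunE ltn_ord.
have step : forall m, f (z m) ==> f (z m.+1).
  move=> m; case: (ltnP m n) => [mn|nm].
    pose i := Ordinal mn.
    have zm : z m = setb (z m) i (x i).
      by apply/ffunP => j; rewrite !ffunE; case: eqP => // ->; rewrite ltnn.
    have zm1 : z m.+1 = setb (z m) i (y i).
      apply/ffunP => j; rewrite !ffunE; case: eqP => [->|/eqP ne]; rewrite ?ltnSn //.
      rewrite ltnS leq_eqVlt; case: (ltngtP j m) => //= E.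
      by exfalso; move: ne; rewrite -val_eqE /= E eqxx.
    rewrite zm1 {1}zm; move: (Hxy i) (Hf i (z m)).
    by case: (x i); case: (y i) => //= _ _; apply/implyP.
  have -> : z m.+1 = z m.
    apply/ffunP => j; rewrite !ffunE.
    have h1 : (j < m.+1)%N by apply: leq_trans (ltn_ord j) _; apply: leqW.
    have h2 : (j < m)%N by apply: leq_trans (ltn_ord j) nm.
    by rewrite h1 h2.
  by apply/implyP.
have all_m : forall m, f x ==> f (z m).
  elim=> [|m IH]; first by rewrite z0; apply/implyP.
  by apply/implyP => fx; move/implyP: (step m); apply; move/implyP: IH; apply.
by rewrite -zn.
Qed.

Lemma improve (R : realType) (rho : R) n k :
  (0 < k)%N -> 0 <= eps rho -> eps rho <= 1 - eps rho ->
  forall N (g : cube n -> bool), (\sum_(x : cube n) cnt x - pot g < N)%N ->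
  exists f : cube n -> bool, [/\ monotone_bool f, mean R f = mean R g &
     agree_prob rho k g <= agree_prob rho k f].
Proof.
move=> k0 e0 e1; elim=> [//|N IH] g HN.
case: (boolP [forall i, forall v, g (setb v i false) ==> g (setb v i true)]) => [/forallP H|H].
  exists g; split => //; apply: mono_of => i v; move/forallP: (H i); apply.
move: H; rewrite negb_forall => /existsP [i]; rewrite negb_forall => /existsP [v].
rewrite negb_imply => /andP [A B].
have lt := @pot_lt n g i v A B.
have le := @pot_le n (cmpr g i).
have [|f [Mf Ef Af]] := IH (cmpr g i).
  move: HN lt le; move: (\sum_(x : cube n) cnt x)%N (pot g) (pot (cmpr g i)); lia.
exists f; split => //; first by rewrite Ef comp_mean.
apply: le_trans Af; exact: compress_agree.
Qed.

Lemma mean_g0 (R : realType) n j : (j <= 2 ^ n)%N ->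
  mean R [ffun x : cube n => (enum_rank x < j)%N] = j%:R / 2 ^+ n.
Proof.
move=> jn; rewrite /mean mulrC; congr (_ * _).
under eq_bigr => x _ do rewrite ffunE.
rewrite -natr_sum; congr (_%:R).
rewrite (reindex (@enum_val (cube n) predT)) /=; last first.
  by exists enum_rank => x _; [rewrite enum_valK | rewrite enum_rankK].
under eq_bigr => x _ do rewrite enum_valK.
have -> : #|predT : pred (cube n)| = (2 ^ n)%N.
  by rewrite cardT -cardE card_ffun card_bool card_ord.
rewrite -(big_mkord xpredT (fun x => (x < j : nat)%N)).
rewrite (big_cat_nat (leq0n j) jn) /=.
rewrite (eq_big_nat _ _ (F2 := fun _ => 1%N)); last by move=> x /andP [_ ->].
rewrite [X in (_ + X)%N](eq_big_nat _ _ (F2 := fun _ => 0%N)); last first.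
  by move=> x /andP [jx _]; rewrite ltnNge jx.
by rewrite !sum_nat_const_nat muln1 muln0 addn0 subn0.
Qed.

Theorem corollary2 (R : realType) (n k j : nat) (rho : R) :
  (1 <= n)%N -> (2 <= k)%N -> 0 < rho -> rho < 1 -> (j <= 2 ^ n)%N ->
  exists f : cube n -> bool,
    [/\ monotone_bool f,
        mean R f = j%:R / (2 ^+ n) &
        forall g : cube n -> bool, mean R g = j%:R / (2 ^+ n) ->
          agree_prob rho k g <= agree_prob rho k f].
Proof.
move=> _ k2 r0 r1 jn.
have k0 : (0 < k)%N by apply: leq_trans k2.
have s0 := sqrtr_ge0 rho.
have s1 : Num.sqrt rho <= 1.
  by rewrite -sqrtr1 ler_sqrt //; apply: ltW.
have e0 : 0 <= eps rho by rewrite /eps; lra.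
have e1 : eps rho <= 1 - eps rho by rewrite /eps; lra.
pose P := fun g : {ffun cube n -> bool} => mean R g == j%:R / 2 ^+ n.
pose g0 : {ffun cube n -> bool} := [ffun x => (enum_rank x < j)%N].
have Pg0 : P g0 by rewrite /P mean_g0.
case: (@arg_maxP _ _ {ffun cube n -> bool} g0 P (fun g => agree_prob rho k g) Pg0)
  => gm Pgm Hgm.
have [f [Mf Ef Af]] := @improve R rho n k k0 e0 e1 _ gm (ltnSn (\sum_(x : cube n) cnt x - pot gm)%N).
exists f; split => //; first by rewrite Ef; apply/eqP.
move=> g Hg.
have fg : (fun_of_fin [ffun x => g x] : cube n -> bool) = g.
  by apply: functional_extensionality => x; rewrite ffunE.
apply: le_trans Af.
have := Hgm [ffun x => g x]; rewrite /P fg Hg eqxx => /(_ isT).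
by [].
Qed.
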